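(* Let $G$ be a group, $s$ a central involution of $G$, and $(L,\zeta)$ a connected $G$-gain graph such that $L$ is isomorphic to the line graph $L(\Gamma)$ of some graph $\Gamma$ and $L$ is not isomorphic to any of $F_1,F_2,F_3$. Then $(L,\zeta)$ is a gain-line graph if and only if every odd triangle of $L$ has gain $s$.
   Context: Graphs are finite and simple. A $G$-gain graph $(\Gamma,\psi)$: graph with a map $\psi$ on ordered pairs of adjacent vertices into $G$ with $\psi(v,u)=\psi(u,v)^{-1}$. Line graph $L(\Gamma)$: vertex set $E_\Gamma$, edges adjacent iff sharing an endpoint. With $V_\Gamma=\{v_1,\dots,v_n\}$, $E_\Gamma=\{e_1,\dots,e_m\}$, a $G$-phase of $\Gamma$ is a matrix $H$ with $H_{i,k}\in G$ if $v_i\in e_k$, $0$ otherwise; $\Psi_L(H)(e_p,e_q)=s\,(H_{r,p})^{-1}H_{r,q}$ with $v_r$ the common endpoint of $e_p,e_q$. $(L,\zeta)$ is a gain-line graph (w.r.t. $s$) if there are a graph $\Gamma$, a graph isomorphism $\phi:L(\Gamma)\to L$ and a $G$-phase $H$ of $\Gamma$ with $\Psi_L(H)=\zeta\circ\phi$. A triangle's gain is $\zeta(v_1,v_2)\zeta(v_2,v_3)\zeta(v_3,v_1)$ (whether it equals the central element $s$ is independent of starting vertex and orientation). A triangle $\{v_1,v_2,v_3\}$ is odd if some vertex $w$ of $L$ is adjacent to an odd number of $v_1,v_2,v_3$. $F_1$ is the diamond ($K_4$ minus an edge); $F_2$ is the wheel consisting of a $4$-cycle and a hub adjacent to its four vertices;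 $F_3$ is the octahedron $K_{2,2,2}$. *)

(* Defs.v *)
From mathcomp Require Import all_boot.
Set Implicit Arguments. Unset Strict Implicit. Unset Printing Implicit Defensive.

Definition simple_graph (T : finType) (e : rel T) : Prop :=
  symmetric e /\ irreflexive e.

Definition connected_graph (T : finType) (e : rel T) : Prop :=
  forall x y, connect e x y.

Definition graph_iso (T1 T2 : finType) (e1 : rel T1) (e2 : rel T2) : Prop :=
  exists f : T1 -> T2, bijective f /\ forall x y, e2 (f x) (f y) = e1 x y.

Definition simple_inc (V E : finType) (inc : E -> {set V}) : Prop :=
  (forall k, #|inc k| = 2) /\ injective inc.

Definition line_adj (V E : finType) (inc : E -> {set V}) : rel E :=
  fun p q => (p != q) && (inc p :&: inc q != set0).

Definition is_line_graph (T : finType) (e : rel T) : Prop :=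
  exists (V E : finType) (inc : E -> {set V}),
    simple_inc inc /\ graph_iso (line_adj inc) e.

(* F1: diamond, K4 minus the edge {0,1}. *)
Definition F1 : rel 'I_4 := fun i j => (i != j) && ((i : nat) + j != 1).
(* F2: wheel, 4-cycle 0-1-2-3-0 plus hub 4. *)
Definition F2 : rel 'I_5 :=
  fun i j => (i != j) && [|| (i : nat) == 4, (j : nat) == 4 | odd (i + j)].
(* F3: octahedron K_{2,2,2} with parts {0,1},{2,3},{4,5}. *)
Definition F3 : rel 'I_6 := fun i j => ((i : nat) %/ 2 != (j : nat) %/ 2).

Local Open Scope group_scope.

(* A G-gain graph (e, zeta): zeta(v,u) = zeta(u,v)^-1 on adjacent pairs
   (values of zeta on non-adjacent pairs are irrelevant). *)
Definition gain_graph (G : groupType) (T : finType) (e : rel T) (zeta : T -> T -> G) : Prop :=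
  forall u v, e u v -> zeta v u = (zeta u v)^-1.

(* Gain-line graph w.r.t. s: there are a graph Gamma = (V,E,inc), a graph
   isomorphism phi : L(Gamma) -> L and a G-phase H of Gamma (entries H r k
   only matter when v_r is an endpoint of e_k) with Psi_L(H) = zeta o phi, where
   Psi_L(H)(p,q) = s * (H r p)^-1 * H r q for the common endpoint r of p, q. *)
Definition gain_line_graph (G : groupType) (s : G) (T : finType) (e : rel T)
    (zeta : T -> T -> G) : Prop :=
  exists (V E : finType) (inc : E -> {set V}) (phi : E -> T) (H : V -> E -> G),
    [/\ simple_inc inc, bijective phi,
        (forall p q, e (phi p) (phi q) = line_adj inc p q) &
        (forall p q r, line_adj inc p q -> r \in inc p -> r \in inc q ->
           s * (H r p)^-1 * H r q = zeta (phi p) (phi q))].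

Definition triangle_gain (G : groupType) (T : finType) (zeta : T -> T -> G) (v1 v2 v3 : T) : G :=
  zeta v1 v2 * zeta v2 v3 * zeta v3 v1.

Definition odd_triangle (T : finType) (e : rel T) (v1 v2 v3 : T) : Prop :=
  exists w, odd (e w v1 + e w v2 + e w v3)%N.

(* Main.v *)
Require Import Defs.
From mathcomp Require Import all_boot.
Set Implicit Arguments. Unset Strict Implicit. Unset Printing Implicit Defensive.

Lemma set2_eq (V : finType) (u v u' v' : V) :
  ([set u; v] == [set u'; v']) = ((u == u') && (v == v') || (u == v') && (v == u')).
Proof.
apply/eqP/idP.
  move=> H.
  have hu : u \in [set u'; v'] by rewrite -H !inE eqxx.
  have hv : v \in [set u'; v'] by rewrite -H !inE eqxx orbT.
  have hu' : u' \in [set u; v] by rewrite H !inE eqxx.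
  have hv' : v' \in [set u; v] by rewrite H !inE eqxx orbT.
  move: hu hv hu' hv'; rewrite !inE.
  by do 4 (case/orP=> /eqP ?; try subst); rewrite ?eqxx ?orbT.
by case/orP=> /andP[/eqP-> /eqP->] //; rewrite setUC.
Qed.

Lemma set2_meet (V : finType) (u v u' v' : V) :
  ([set u; v] :&: [set u'; v'] != set0) = [|| u==u', u==v', v==u' | v==v'].
Proof.
apply/set0Pn/idP.
  by case=> x; rewrite !inE => /andP[] /orP[] /eqP-> /orP[] /eqP->; rewrite eqxx ?orbT.
case/or4P=> /eqP->; [exists u'|exists v'|exists u'|exists v']; by rewrite !inE !eqxx ?orbT.
Qed.

Definition codeeq (I : eqType) (c d : I * I) :=
  (c.1 == d.1) && (c.2 == d.2) || (c.1 == d.2) && (c.2 == d.1).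
Definition codeadj (I : eqType) (c d : I * I) :=
  ~~ codeeq c d && [|| c.1 == d.1, c.1 == d.2, c.2 == d.1 | c.2 == d.2].

Lemma adj_code (V E : finType) (inc : E -> {set V}) (I : eqType) (nm : I -> V) x y c d :
  injective inc -> injective nm -> inc x = [set nm c.1; nm c.2] ->
  inc y = [set nm d.1; nm d.2] -> line_adj inc x y = codeadj c d.
Proof.
move=> iinc inm hx hy; rewrite /line_adj /codeadj -(inj_eq iinc) hx hy set2_eq set2_meet.
by rewrite /codeeq !(inj_eq inm).
Qed.

Lemma eq_code (V E : finType) (inc : E -> {set V}) (I : eqType) (nm : I -> V) x y c d :
  injective inc -> injective nm -> inc x = [set nm c.1; nm c.2] ->
  inc y = [set nm d.1; nm d.2] -> (x == y) = codeeq c d.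
Proof.
move=> iinc inm hx hy; rewrite -(inj_eq iinc) hx hy set2_eq.
by rewrite /codeeq !(inj_eq inm).
Qed.

Definition check2 (I : eqType) (P : I * I -> I * I -> bool) (Fn : nat -> nat -> bool) (c0 : I * I)
  (cs : seq (I * I)) (n : nat) :=
  all (fun i => all (fun j => P (nth c0 cs i) (nth c0 cs j) == Fn i j) (iota 0 n)) (iota 0 n).

Lemma check2P (I : eqType) P Fn (c0 : I * I) cs n : check2 P Fn c0 cs n ->
  forall i j, i < n -> j < n -> P (nth c0 cs i) (nth c0 cs j) = Fn i j.
Proof.
move=> /allP H i j hi hj.
have /allP H2 : all (fun j => P (nth c0 cs i) (nth c0 cs j) == Fn i j) (iota 0 n).
  by apply: H; rewrite mem_iota.
by apply/eqP; apply: H2; rewrite mem_iota hj.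
Qed.

Lemma iso_codes (T : finType) (e : rel T) (V E : finType) (inc : E -> {set V})
  (phi : E -> T) (I : eqType) (nm : I -> V) (n : nat) (F : rel 'I_n)
  (Fn : nat -> nat -> bool) (Es : seq E) (cs : seq (I * I)) (c0 : I * I) (x0 : E) :
  injective inc -> injective nm -> bijective phi ->
  (forall p q, e (phi p) (phi q) = line_adj inc p q) ->
  size Es = n ->
  (forall k, k < n -> inc (nth x0 Es k) = [set nm (nth c0 cs k).1; nm (nth c0 cs k).2]) ->
  (forall x, x \in Es) ->
  (forall i j : 'I_n, F i j = Fn i j) ->
  check2 (@codeadj I) Fn c0 cs n ->
  check2 (@codeeq I) (fun i j => i == j) c0 cs n ->
  graph_iso F e.
Proof.
move=> iinc inm bphi he hsz hinc hall hF /check2P cadj /check2P ceq.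
have iphi := bij_inj bphi.
pose f (i : 'I_n) := phi (nth x0 Es i).
have finj : injective f.
  move=> i j /iphi /eqP; rewrite (eq_code iinc inm (hinc _ (ltn_ord i)) (hinc _ (ltn_ord j))).
  by rewrite ceq // => /eqP /val_inj.
exists f; split.
  apply: (inj_card_bij finj).
  rewrite card_ord -(bij_eq_card bphi) -hsz.
  apply: leq_trans (card_size Es); apply: subset_leq_card.
  by apply/subsetP => x _; rewrite hall.
move=> i j; rewrite /f he (adj_code iinc inm (hinc _ (ltn_ord i)) (hinc _ (ltn_ord j))).
by rewrite cadj // hF.
Qed.

Lemma set2_of (V : finType) (A : {set V}) x y :
  #|A| = 2 -> x \in A -> y \in A -> x != y -> A = [set x; y].
Proof.
move=> hc hx hy hxy; apply/eqP; rewrite eq_sym eqEcard hc cards2 hxy leqnn andbT.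
by apply/subsetP => z /set2P [] ->.
Qed.

Lemma no3 (V : finType) (A : {set V}) x y z :
  #|A| = 2 -> x \in A -> y \in A -> z \in A -> x != y -> x != z -> y != z -> False.
Proof.
move=> hc hx hy hz hxy hxz hyz.
have := set2_of hc hx hy hxy; move=> E; move: hz; rewrite E => /set2P [] /eqP.
  by rewrite eq_sym (negbTE hxz).
by rewrite eq_sym (negbTE hyz).
Qed.

Local Open Scope group_scope.

Lemma gain3 (G : groupType) (s x y z : G) : s * s = 1 -> (forall g : G, s * g = g * s) ->
  (s * x^-1 * y) * (s * y^-1 * z) * (s * z^-1 * x) = s.
Proof.
move=> ss hc.
have E1 : s * x^-1 * y * (s * y^-1 * z) = s * s * (x^-1 * z).
  by rewrite !mulgA -(mulgA _ y s) -hc !mulgA -(mulgA _ y y^-1) mulgV mulg1 -(mulgA s x^-1 s) -hc mulgA.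
rewrite E1 ss mul1g !mulgA -(mulgA _ z s) -hc !mulgA -(mulgA _ z z^-1) mulgV mulg1 -mulgA hc mulKg.
by []. Qed.

Lemma forward (G : groupType) (s : G) (T : finType) (e : rel T) (zeta : T -> T -> G) :
  s * s = 1 -> (forall g : G, s * g = g * s) -> simple_graph e ->
  gain_line_graph s e zeta ->
  forall v1 v2 v3 : T, e v1 v2 -> e v2 v3 -> e v1 v3 ->
     odd_triangle e v1 v2 v3 -> triangle_gain zeta v1 v2 v3 = s.
Proof.
move=> ss hc [sym irr] [V [E [inc [phi [H [[ic iinc] [psi pK Kp] he hH]]]]]] v1 v2 v3.
rewrite -(Kp v1) -(Kp v2) -(Kp v3).
move: (psi v1) (psi v2) (psi v3) => p1 p2 p3; rewrite !he => a12 a23 a13 [w].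
rewrite -(Kp w) !he; move: (psi w) => q.
case: (boolP [exists r, [&& r \in inc p1, r \in inc p2 & r \in inc p3]]).
  case/existsP=> r /and3P[r1 r2 r3] _.
  rewrite /triangle_gain -(hH _ _ _ a12 r1 r2) -(hH _ _ _ a23 r2 r3).
  have a31 : line_adj inc p3 p1.
    by move: a13; rewrite /line_adj eq_sym setIC.
  by rewrite -(hH _ _ _ a31 r3 r1) gain3.
move=> /existsPn nr.
have [a /setIP[a1 a2]] := set0Pn _ (proj2 (andP a12)).
have [b /setIP[b2 b3]] := set0Pn _ (proj2 (andP a23)).
have [c /setIP[c1 c3]] := set0Pn _ (proj2 (andP a13)).
have nab : a != b by apply/eqP=> Eq; move: (nr a); rewrite a1 a2 Eq b3.
have nac : a != c by apply/eqP=> Eq; move: (nr a); rewrite a1 a2 Eq c3.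
have nbc : b != c by apply/eqP=> Eq; move: (nr b); rewrite b2 b3 Eq c1.
have E1 := set2_of (ic p1) a1 c1 nac.
have E2 := set2_of (ic p2) a2 b2 nab.
have E3 := set2_of (ic p3) b3 c3 nbc.
have Q1 : (q == p1) = (a \in inc q) && (c \in inc q).
  apply/eqP/andP=> [->|[ha hc']]; first by rewrite a1 c1.
  by apply: iinc; rewrite E1; apply: set2_of.
have Q2 : (q == p2) = (a \in inc q) && (b \in inc q).
  apply/eqP/andP=> [->|[ha hb]]; first by rewrite a2 b2.
  by apply: iinc; rewrite E2; apply: set2_of.
have Q3 : (q == p3) = (b \in inc q) && (c \in inc q).
  apply/eqP/andP=> [->|[hb hc']]; first by rewrite b3 c3.
  by apply: iinc; rewrite E3; apply: set2_of.
have N3 : ~~ [&& a \in inc q, b \in inc q & c \in inc q].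
  by apply/negP=> /and3P[ha hb hc']; apply: (no3 (ic q) ha hb hc').
have M : forall x y : V, (inc q :&: [set x; y] != set0) = (x \in inc q) || (y \in inc q).
  move=> x y; apply/set0Pn/idP.
    by case=> z /setIP[hz /set2P[] Eq]; subst z; rewrite hz ?orbT.
  by case/orP=> h; [exists x|exists y]; rewrite !inE h eqxx ?orbT.
rewrite /line_adj E1 E2 E3 !M Q1 Q2 Q3.
move: N3; case: (a \in inc q); case: (b \in inc q); case: (c \in inc q) => //.
Qed.

Lemma ladj (V E : finType) (inc : E -> {set V}) p q r :
  p != q -> r \in inc p -> r \in inc q -> line_adj inc p q.
Proof. by move=> hpq hp hq; rewrite /line_adj hpq; apply/set0Pn; exists r; rewrite inE hp hq. Qed.

Lemma construct (G : groupType) (s : G) (T : finType) (e : rel T) (zeta : T -> T -> G)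
  (V E : finType) (inc : E -> {set V}) (phi : E -> T) :
  s * s = 1 -> (forall g : G, s * g = g * s) ->
  simple_inc inc -> bijective phi -> (forall p q, e (phi p) (phi q) = line_adj inc p q) ->
  gain_graph e zeta ->
  (forall r p p0 q, r \in inc p -> r \in inc p0 -> r \in inc q -> p != p0 -> p0 != q -> p != q ->
     triangle_gain zeta (phi p) (phi p0) (phi q) = s) ->
  gain_line_graph s e zeta.
Proof.
move=> ss hc sinc bphi he gg htri.
have sV : s^-1 = s by apply: mulg1_eq.
pose H (r : V) (q : E) := if [pick p | r \in inc p] is Some p0 then
   (if q == p0 then 1 else s * zeta (phi p0) (phi q)) else 1.
exists V, E, inc, phi, H; split => // p q r hpq rp rq.
rewrite /H; case: pickP => [p0 r0|]; last by move/(_ p); rewrite rp.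
have hpq' := hpq; move/andP: hpq' => [npq _].
have zi : forall x y, x != y -> r \in inc x -> r \in inc y -> zeta (phi y) (phi x) = (zeta (phi x) (phi y))^-1.
  by move=> x y nxy rx ry; apply: gg; rewrite he (ladj nxy rx ry).
case: (eqVneq p p0) => [ep|np]; case: (eqVneq q p0) => [eq|nq].
- by move: npq; rewrite ep eq eqxx.
- by subst p; rewrite invg1 mulg1 mulgA ss mul1g.
- subst q; rewrite mulg1 invgM sV mulgA -hc mulgA ss mul1g.
  by rewrite -zi // eq_sym.
- have np0q : p0 != q by rewrite eq_sym.
  have T3 := htri r p p0 q rp r0 rq np np0q npq.
  rewrite /triangle_gain (zi p q) // in T3.
  have T4 : zeta (phi p) (phi p0) * zeta (phi p0) (phi q) = s * zeta (phi p) (phi q).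
    by rewrite -T3 mulgVK.
  rewrite invgM sV -(zi p0 p) ?(eq_sym p0) //.
  rewrite !mulgA -(mulgA _ s s) ss mulg1.
  by rewrite -mulgA T4 mulgA ss mul1g.
Qed.

Lemma other (V : finType) (A : {set V}) r : #|A| = 2 -> r \in A -> exists2 a, r != a & A = [set r; a].
Proof.
move=> /eqP/cards2P [x [y [nxy ->]]]; rewrite !inE => /orP[] /eqP ->.
  by exists y.
by exists x; rewrite 1?eq_sym // setUC.
Qed.

Lemma sub4 (V : finType) (X : {set V}) r a b c : #|X| = 2 -> X \subset [set r; a; b; c] ->
  X = [set r;a] \/ X = [set r;b] \/ X = [set r;c] \/ X = [set a;b] \/ X = [set b;c] \/ X = [set c;a].
Proof.
move=> /eqP/cards2P [u [v [nuv ->]]] /subsetP H.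
have := H u; have := H v; rewrite !inE !eqxx ?orbT => /(_ isT) hv /(_ isT) hu.
move: hu hv nuv; rewrite -!orbA => /or4P[] /eqP-> /or4P[] /eqP->; rewrite ?eqxx // => _;
 do ![left; solve [reflexivity | rewrite setUC; reflexivity] | right |
      solve [reflexivity | rewrite setUC; reflexivity]].
Qed.

Definition k0 : 'I_4 := @Ordinal 4 0 isT.
Definition k1 : 'I_4 := @Ordinal 4 1 isT.
Definition k2 : 'I_4 := @Ordinal 4 2 isT.
Definition k3 : 'I_4 := @Ordinal 4 3 isT.
Definition j0 : 'I_3 := @Ordinal 3 0 isT.
Definition j1 : 'I_3 := @Ordinal 3 1 isT.
Definition j2 : 'I_3 := @Ordinal 3 2 isT.
Definition F1n (i j : nat) := ((i != j) && (i + j != 1))%N.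
Definition F2n (i j : nat) := ((i != j) && [|| i == 4, j == 4 | odd (i + j)])%N.
Definition F3n (i j : nat) := (i %/ 2 != j %/ 2)%N.
Definition nm4 (V : Type) (r a b c : V) (i : 'I_4) := nth r [:: r; a; b; c] i.
Definition cs3 : seq ('I_3 * 'I_3) := [:: (j1, j2); (j0, j2); (j0, j1)].
Definition inc3 (k : 'I_3) : {set 'I_3} := [set (nth (j0, j0) cs3 k).1; (nth (j0, j0) cs3 k).2].

Lemma nm4_inj (V : eqType) (r a b c : V) : uniq [:: r; a; b; c] -> injective (nm4 r a b c).
Proof.
move=> u i j /eqP; rewrite /nm4 nth_uniq // => /eqP/val_inj //.
Qed.

Lemma K3_checks : check2 (@codeadj _) (fun i j => i != j) (j0, j0) cs3 3 /\
  check2 (@codeeq _) (fun i j => i == j) (j0, j0) cs3 3.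
Proof. by []. Qed.

Lemma inc3_simple : simple_inc inc3.
Proof.
split.
  by case=> [[|[|[|//]]] ?]; rewrite /inc3 cards2.
move=> i j /eqP; rewrite /inc3 set2_eq -/(codeeq _ _).
by rewrite (check2P (proj2 K3_checks)) // => /eqP /val_inj.
Qed.

Lemma inc3_adj (i j : 'I_3) : line_adj inc3 i j = (i != j :> nat).
Proof.
rewrite (@adj_code _ _ inc3 _ id i j (nth (j0, j0) cs3 i) (nth (j0, j0) cs3 j) (proj2 inc3_simple)) //.
by rewrite (check2P (proj1 K3_checks)).
Qed.

Lemma inc3_notri (r x y z : 'I_3) : r \in inc3 x -> r \in inc3 y -> r \in inc3 z ->
  x != y -> y != z -> x != z -> False.
Proof.
rewrite /inc3 !inE.
by case: r => [[|[|[|//]]] ?]; case: x => [[|[|[|//]]] ?]; case: y => [[|[|[|//]]] ?];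
  case: z => [[|[|[|//]]] ?].
Qed.

Ltac cov := first [ by rewrite !inE eqxx ?orbT
   | match goal with hi : injective ?inc, h : ?inc ?x = ?S, h2 : ?inc ?y = ?S |- _ =>
       (have -> : x = y by apply: hi; rewrite h h2); by rewrite !inE eqxx ?orbT end
   | match goal with h : ?inc ?x = ?S, h2 : _ =1 xpred0 |- _ =>
       by move: (h2 x) => /=; rewrite h eqxx end ].

Lemma special (G : groupType) (s : G) (T : finType) (e : rel T) (zeta : T -> T -> G)
  (V E : finType) (inc : E -> {set V}) (phi : E -> T) r p p0 q :
  s * s = 1 -> (forall g : G, s * g = g * s) -> simple_graph e -> gain_graph e zeta ->
  connected_graph e ->
  simple_inc inc -> bijective phi -> (forall x y, e (phi x) (phi y) = line_adj inc x y) ->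
  ~ graph_iso F1 e -> ~ graph_iso F2 e -> ~ graph_iso F3 e ->
  r \in inc p -> r \in inc p0 -> r \in inc q -> p != p0 -> p0 != q -> p != q ->
  (forall w, ~~ odd (e w (phi p) + e w (phi p0) + e w (phi q))) ->
  gain_line_graph s e zeta.
Proof.
move=> ss hc [sym irr] gg conn [ic iinc] bphi he nF1 nF2 nF3 rp rp0 rq npp0 np0q npq ev.
have [a nra hp] := other (ic p) rp.
have [b nrb hp0] := other (ic p0) rp0.
have [c nrc hq] := other (ic q) rq.
have nab : a != b.
  by apply/negP => /eqP Eab; move/negP: npp0; apply; apply/eqP/iinc; rewrite hp hp0 Eab.
have nbc : b != c.
  by apply/negP => /eqP Eab; move/negP: np0q; apply; apply/eqP/iinc; rewrite hq hp0 Eab.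
have nac : a != c.
  by apply/negP => /eqP Eab; move/negP: npq; apply; apply/eqP/iinc; rewrite hp hq Eab.
have nar : a != r by rewrite eq_sym.
have nbr : b != r by rewrite eq_sym.
have ncr : c != r by rewrite eq_sym.
have nba : b != a by rewrite eq_sym.
have ncb : c != b by rewrite eq_sym.
have nca : c != a by rewrite eq_sym.
have uq : uniq [:: r; a; b; c].
  by rewrite /= !inE !negb_or nra nrb nrc nab nac nbc.
pose A4 := [set r; a; b; c].
have sub_p : forall y, (y == p) || (y == p0) || (y == q) -> inc y \subset A4.
  move=> y /orP[/orP[]|] /eqP ->; rewrite ?hp ?hp0 ?hq; apply/subsetP => z /set2P [] ->;
  by rewrite !inE eqxx ?orbT.
have oddl : forall x v u, v \in inc x -> u \in inc x -> v \in A4 -> u \notin A4 -> False.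
  move=> x v u hv hu vA uA.
  have nvu : v != u by apply/negP => /eqP E0; move: uA; rewrite -E0 vA.
  have hx := set2_of (ic x) hv hu nvu.
  have xn : forall y, (y == p) || (y == p0) || (y == q) -> (x == y) = false.
    move=> y hy; apply/negbTE/negP => /eqP E0; subst y.
    by move: uA; rewrite (subsetP (sub_p _ hy) _ hu).
  have := ev (phi x); rewrite !he /line_adj hx hp hp0 hq !set2_meet.
  rewrite !xn ?eqxx ?orbT //=.
  move: uA; rewrite !inE !negb_or -!andbA => /and4P [/negbTE-> /negbTE-> /negbTE-> /negbTE->].
  move: vA; rewrite !inE -!orbA => /or4P [] /eqP ->;
  by rewrite ?eqxx ?(negbTE nra) ?(negbTE nrb) ?(negbTE nrc) ?(negbTE nab) ?(negbTE nac)
     ?(negbTE nbc) ?(negbTE nar) ?(negbTE nbr) ?(negbTE ncr) ?(negbTE nba) ?(negbTE ncb)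
     ?(negbTE nca) ?orbT.
have [psi pK Kp] := bphi.
pose Pt := [pred w | inc (psi w) \subset A4].
have cl : closed e Pt.
  apply: (intro_closed (sym_connect_sym sym)) => w w'.
  rewrite -(Kp w) -(Kp w') he !inE !pK; move: (psi w) (psi w') => x y.
  case/andP => _ /set0Pn [v /setIP [vx vy]] sx.
  have vA := subsetP sx _ vx.
  have [u _ hy] := other (ic y) vy.
  case: (boolP (u \in A4)) => uA.
    by rewrite hy; apply/subsetP => z /set2P [] ->.
  by exfalso; apply: (oddl y v u vy _ vA uA); rewrite hy !inE eqxx orbT.
have allA : forall x, inc x \subset A4.
  move=> x; have := closed_connect cl (conn (phi p) (phi x)).
  by rewrite !inE !pK (sub_p p) ?eqxx // => <-.
have cover6 : forall x, x = p \/ x = p0 \/ x = q \/ inc x = [set a; b] \/ inc x = [set b; c]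
    \/ inc x = [set c; a].
  move=> x; case: (sub4 (ic x) (allA x)) => [h|[h|[h|h]]].
  - by left; apply: iinc; rewrite h hp.
  - by right; left; apply: iinc; rewrite h hp0.
  - by right; right; left; apply: iinc; rewrite h hq.
  - by right; right; right.
have inm := nm4_inj uq.
have iso : forall n (F : rel 'I_n) (Fn : nat -> nat -> bool) Es cs, size Es = n ->
   (forall k, k < n -> inc (nth p Es k) = [set nm4 r a b c (nth (k0, k0) cs k).1;
                                           nm4 r a b c (nth (k0, k0) cs k).2]) ->
   (forall x, x \in Es) -> (forall i j : 'I_n, F i j = Fn i j) ->
   check2 (@codeadj _) Fn (k0, k0) cs n -> check2 (@codeeq _) (fun i j => i == j) (k0, k0) cs n ->
   graph_iso F e.
  move=> n F Fn Es cs h1 h2 h3 h4 h5 h6.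
  exact: (iso_codes iinc inm bphi he h1 h2 h3 h4 h5 h6).
case: (pickP (fun x => inc x == [set a; b])) => [xab /eqP hab | nab0];
case: (pickP (fun x => inc x == [set b; c])) => [xbc /eqP hbc | nbc0];
case: (pickP (fun x => inc x == [set c; a])) => [xca /eqP hca | nca0].
- case: nF3; apply: (iso 6 F3 F3n [:: p; xbc; p0; xca; q; xab]
     [:: (k0,k1);(k2,k3);(k0,k2);(k3,k1);(k0,k3);(k1,k2)]) => //.
  + by case=> [|[|[|[|[|[|]]]]]] //= _; rewrite ?hp ?hp0 ?hq ?hab ?hbc ?hca.
  + by move=> x; case: (cover6 x) => [->|[->|[->|[h|[h|h]]]]]; cov.
- case: nF2; apply: (iso 5 F2 F2n [:: p;q;xbc;xab;p0]
     [:: (k0,k1);(k0,k3);(k2,k3);(k1,k2);(k0,k2)]) => //.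
  + by case=> [|[|[|[|[|[|]]]]]] //= _; rewrite ?hp ?hp0 ?hq ?hab ?hbc ?hca.
  + by move=> x; case: (cover6 x) => [->|[->|[->|[h|[h|h]]]]]; cov.
- case: nF2; apply: (iso 5 F2 F2n [:: p0;q;xca;xab;p]
     [:: (k0,k2);(k0,k3);(k3,k1);(k1,k2);(k0,k1)]) => //.
  + by case=> [|[|[|[|[|[|]]]]]] //= _; rewrite ?hp ?hp0 ?hq ?hab ?hbc ?hca.
  + by move=> x; case: (cover6 x) => [->|[->|[->|[h|[h|h]]]]]; cov.
- case: nF1; apply: (iso 4 F1 F1n [:: q;xab;p;p0]
     [:: (k0,k3);(k1,k2);(k0,k1);(k0,k2)]) => //.
  + by case=> [|[|[|[|[|[|]]]]]] //= _; rewrite ?hp ?hp0 ?hq ?hab ?hbc ?hca.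
  + by move=> x; case: (cover6 x) => [->|[->|[->|[h|[h|h]]]]]; cov.
- case: nF2; apply: (iso 5 F2 F2n [:: p;p0;xbc;xca;q]
     [:: (k0,k1);(k0,k2);(k2,k3);(k3,k1);(k0,k3)]) => //.
  + by case=> [|[|[|[|[|[|]]]]]] //= _; rewrite ?hp ?hp0 ?hq ?hab ?hbc ?hca.
  + by move=> x; case: (cover6 x) => [->|[->|[->|[h|[h|h]]]]]; cov.
- case: nF1; apply: (iso 4 F1 F1n [:: p;xbc;p0;q]
     [:: (k0,k1);(k2,k3);(k0,k2);(k0,k3)]) => //.
  + by case=> [|[|[|[|[|[|]]]]]] //= _; rewrite ?hp ?hp0 ?hq ?hab ?hbc ?hca.
  + by move=> x; case: (cover6 x) => [->|[->|[->|[h|[h|h]]]]]; cov.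
- case: nF1; apply: (iso 4 F1 F1n [:: p0;xca;p;q]
     [:: (k0,k2);(k3,k1);(k0,k1);(k0,k3)]) => //.
  + by case=> [|[|[|[|[|[|]]]]]] //= _; rewrite ?hp ?hp0 ?hq ?hab ?hbc ?hca.
  + by move=> x; case: (cover6 x) => [->|[->|[->|[h|[h|h]]]]]; cov.
- have gi : graph_iso (line_adj inc3) e.
    apply: (iso 3 (line_adj inc3) (fun i j => i != j) [:: p; p0; q]
       [:: (k0,k1);(k0,k2);(k0,k3)]) => //.
    + by case=> [|[|[|[|[|[|]]]]]] //= _; rewrite ?hp ?hp0 ?hq.
    + by move=> x; case: (cover6 x) => [->|[->|[->|[h|[h|h]]]]]; cov.
    + by move=> i j; rewrite inc3_adj.
  case: gi => f [bf hf]; apply: (construct ss hc inc3_simple bf hf gg).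
  move=> r' x y z hx hy hz nxy nyz nxz; exfalso.
  exact: (inc3_notri hx hy hz nxy nyz nxz).
Qed.

Theorem mainTheorem6 (G : groupType) (s : G) (T : finType) (e : rel T)
    (zeta : T -> T -> G) :
  s * s = 1 -> s <> 1 -> (forall g : G, s * g = g * s) ->
  simple_graph e -> gain_graph e zeta -> connected_graph e ->
  is_line_graph e ->
  ~ graph_iso F1 e -> ~ graph_iso F2 e -> ~ graph_iso F3 e ->
  (gain_line_graph s e zeta <->
   forall v1 v2 v3 : T, e v1 v2 -> e v2 v3 -> e v1 v3 ->
     odd_triangle e v1 v2 v3 -> triangle_gain zeta v1 v2 v3 = s).
Proof.
move=> ss _ hc sg gg conn [V [E [inc [sinc [f [bf hf]]]]]] nF1 nF2 nF3; split.
  exact: forward.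
move=> H.
case: (boolP [exists r : V, exists p, exists p0, exists q,
   [&& r \in inc p, r \in inc p0 & r \in inc q] && [&& p != p0, p0 != q & p != q] &&
   ~~ [exists w, odd (e w (f p) + e w (f p0) + e w (f q))]]).
  case/existsP=> r /existsP [p /existsP [p0 /existsP [q /andP [/andP [/and3P [rp rp0 rq]
    /and3P [n1 n2 n3]] hno]]]].
  apply: (special ss hc sg gg conn sinc bf hf nF1 nF2 nF3 rp rp0 rq n1 n2 n3).
  by move/existsPn: hno.
move/existsPn => hall.
apply: (construct ss hc sinc bf hf gg) => r p p0 q rp rp0 rq npp0 np0q npq.
have [ic iinc] := sinc.
apply: H; rewrite ?hf.
- exact: (ladj npp0 rp rp0).
- exact: (ladj np0q rp0 rq).
- exact: (ladj npq rp rq).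
have := hall r; move/existsPn/(_ p)/existsPn/(_ p0)/existsPn/(_ q).
rewrite rp rp0 rq npp0 np0q npq /= negbK => /existsP [w hw].
by exists w.
Qed.
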